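(* Let $J,\mu\in\mathbb{R}$, $\Delta\neq0$, $T>0$, and let $(\kappa_l)_{l\ge1}$ be any real sequence. There is a constant $C$ depending only on $J,\mu,\Delta,T$ (not on $N$, $k$ or $\kappa$) such that for every even $N\ge4$ and every $k\in\{(2n+1)\pi/N:n=0,\dots,N-1\}$ with $\epsilon(k)>0$, $$\Big|\mathscr{E}_\Delta(k)-\tfrac{T}{2}|f_N(k)|\Big|\le C .$$ Consequently, with $\gamma(N)=\sum_{n=0}^{N-1}|f_N(k_n)|$ and the uncontrolled quantum Fisher information $I(\Delta)=\big(\sum_k\mathscr{E}_\Delta(k)\big)^2$ (sum over those $k$ with $\epsilon(k)>0$, all others having $f_N(k)=0$), one has $\big|\sqrt{I(\Delta)}-T\gamma(N)/2\big|\le CN$; hence the divergence near $k=0$ and the leading scaling with $N$ are the same as for the optimally controlled value $I_0(\Delta)=[\gamma(N)/2]^2T^2$ whenever $\gamma(N)$ grows at least linearly in $N$.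
   Context: Let $f_N(k)=2\sum_{l=1}^{N/2-1}\kappa_l\sin(kl)+\kappa_{N/2}$ and $\epsilon(k)=\sqrt{[\Delta f_N(k)/2]^2+(J\cos k+\mu)^2}$ (the Bogoliubov quasiparticle energy of the long-range Kitaev chain). For a parameter $\theta$, given real functions $a_\theta(k)$ and $\xi_\theta(k)$, set $$\mathscr{E}_\theta(k)=\Big\{T^2a_\theta(k)^2+\tfrac14\xi_\theta(k)^2\sin^2[2\epsilon(k)T]+\tfrac14\xi_\theta(k)^2\big(1-\cos[2\epsilon(k)T]\big)^2\Big\}^{1/2},$$ the single-mode eigenvalues of the estimation generator. For $\theta=\Delta$: $a_\Delta(k)=\partial_\Delta\epsilon(k)=\Delta f_N(k)^2/[4\epsilon(k)]$ and $\xi_\Delta(k)=-(J\cos k+\mu)f_N(k)/[2\epsilon(k)^2]$. *)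

(* Defs.v *)
From Stdlib Require Import Reals Lra Lia Arith.
Open Scope R_scope.

Fixpoint sum1 (F : nat -> R) (m : nat) : R :=
  match m with
  | O => 0
  | S m' => sum1 F m' + F m
  end.

Fixpoint sum0 (F : nat -> R) (m : nat) : R :=
  match m with
  | O => 0
  | S m' => sum0 F m' + F m'
  end.

(* f_N(k) = 2 sum_{l=1}^{N/2-1} kappa_l sin(k l) + kappa_{N/2};
   kappa : nat -> R is indexed from 1 (kappa 0 is never used). *)
Definition fN (kappa : nat -> R) (N : nat) (k : R) : R :=
  2 * sum1 (fun l => kappa l * sin (k * INR l)) (Nat.div N 2 - 1) + kappa (Nat.div N 2).

Definition eps (J mu D : R) (kappa : nat -> R) (N : nat) (k : R) : R :=
  sqrt ((D * fN kappa N k / 2) ^ 2 + (J * cos k + mu) ^ 2).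

Definition scrE (T a xi e : R) : R :=
  sqrt (T ^ 2 * a ^ 2 + / 4 * xi ^ 2 * (sin (2 * e * T)) ^ 2
        + / 4 * xi ^ 2 * (1 - cos (2 * e * T)) ^ 2).

Definition aD (J mu D : R) kappa N k : R :=
  D * (fN kappa N k) ^ 2 / (4 * eps J mu D kappa N k).

Definition xiD (J mu D : R) kappa N k : R :=
  - (J * cos k + mu) * fN kappa N k / (2 * (eps J mu D kappa N k) ^ 2).

Definition EDelta (J mu D T : R) kappa N k : R :=
  scrE T (aD J mu D kappa N k) (xiD J mu D kappa N k) (eps J mu D kappa N k).

Definition kmom (N n : nat) : R := INR (2 * n + 1) * PI / INR N.

Definition gammaN kappa N : R := sum0 (fun n => Rabs (fN kappa N (kmom N n))) N.

Definition QFI (J mu D T : R) kappa N : R :=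
  (sum0 (fun n => if Rlt_dec 0 (eps J mu D kappa N (kmom N n))
                  then EDelta J mu D T kappa N (kmom N n) else 0) N) ^ 2.

(* Main.v *)
Require Import Defs.
From Stdlib Require Import Reals Lra Lia Arith.
Open Scope R_scope.

Lemma scrE_bounds T a xi e : 0 < T ->
  T * Rabs a <= scrE T a xi e <= T * Rabs a + Rabs xi.
Proof.
  intros hT. unfold scrE.
  assert (Hsc := sin2_cos2 (2*e*T)). unfold Rsqr in Hsc.
  assert (Hc1 := COS_bound (2*e*T)).
  set (s := sin (2*e*T)) in *. set (co := cos (2*e*T)) in *.
  assert (Hb : / 4 * xi ^ 2 * s ^ 2 + / 4 * xi ^ 2 * (1 - co) ^ 2 = xi^2 * ((1-co)/2)).
  { replace (s^2) with (1 - co^2) by (simpl; lra). field. }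
  assert (H0 : 0 <= (1-co)/2 <= 1) by lra.
  assert (Hx2 : 0 <= xi^2) by (apply pow2_ge_0).
  assert (Ha0 := Rabs_pos a). assert (Hx0 := Rabs_pos xi).
  rewrite Rplus_assoc, Hb.
  assert (E1 : T^2 * a^2 = (T * Rabs a)^2) by (rewrite <- (pow2_abs a); ring).
  assert (E2 : xi^2 = (Rabs xi)^2) by (rewrite pow2_abs; ring).
  split.
  - rewrite <- (sqrt_pow2 (T * Rabs a)) at 1 by nra.
    apply sqrt_le_1_alt. rewrite E1. assert (0 <= xi^2 * ((1-co)/2)) by nra. lra.
  - rewrite <- (sqrt_pow2 (T * Rabs a + Rabs xi)) by nra.
    apply sqrt_le_1_alt. rewrite E1, E2.
    assert (Rabs xi ^2 * ((1-co)/2) <= Rabs xi ^2) by nra.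
    assert (0 <= T * Rabs a * Rabs xi) by (apply Rmult_le_pos; nra).
    nra.
Qed.

Lemma core_ax D f c e : D <> 0 -> e = sqrt ((D * f / 2) ^ 2 + c ^ 2) -> 0 < e ->
  Rabs (D * f ^ 2 / (4 * e)) <= Rabs f / 2 /\
  Rabs f / 2 - Rabs (D * f ^ 2 / (4 * e)) <= Rabs c / Rabs D /\
  Rabs (- c * f / (2 * e ^ 2)) <= 1 / Rabs D.
Proof.
  intros hD he he0.
  assert (hDp : 0 < Rabs D) by (apply Rabs_pos_lt; auto).
  set (x := Rabs D * Rabs f / 2).
  assert (hx0 : 0 <= x) by (unfold x; assert (0 <= Rabs f) by apply Rabs_pos; nra).
  assert (hc0 := Rabs_pos c).
  assert (he2 : e ^ 2 = x ^ 2 + Rabs c ^ 2).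
  { rewrite he. rewrite pow2_sqrt.
    - unfold x. rewrite <- (pow2_abs c). rewrite <- Rabs_mult.
      replace ((D*f/2)^2) with ((D*f)^2/4) by field. rewrite <- (pow2_abs (D*f)). field.
    - assert (0 <= (D*f/2)^2) by apply pow2_ge_0. assert (0 <= c^2) by apply pow2_ge_0. lra. }
  assert (hxe : x <= e) by nra.
  assert (hce : Rabs c <= e) by nra.
  assert (hexc : e <= x + Rabs c) by nra.
  assert (hf : Rabs f = 2 * x / Rabs D) by (unfold x; field; lra).
  assert (Ha : Rabs (D * f ^ 2 / (4 * e)) = x * x / (Rabs D * e)).
  { unfold Rdiv. rewrite !Rabs_mult, Rabs_inv, Rabs_mult, <- RPow_abs, (Rabs_right 4) by lra.
    rewrite (Rabs_right e) by lra. rewrite hf. field. lra. }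
  assert (Hx : Rabs (- c * f / (2 * e ^ 2)) = Rabs c * x * 2 / (Rabs D * (2 * e^2))).
  { unfold Rdiv. rewrite !Rabs_mult, Rabs_inv, Rabs_Ropp, Rabs_mult, (Rabs_right 2) by lra.
    rewrite (Rabs_right (e^2)) by nra. rewrite hf. field. nra. }
  rewrite Ha, Hx, hf. split; [|split].
  - apply Rmult_le_reg_r with (Rabs D * e). nra.
    field_simplify; try lra. nra.
  - apply Rmult_le_reg_r with (Rabs D * e). nra.
    field_simplify; try lra. nra.
  - assert (he2p : 0 < e^2) by nra.
    assert (E : Rabs c * x * 2 / (Rabs D * (2 * e ^ 2)) = (Rabs c * x / e^2) * (1/Rabs D))
      by (field; split; lra).
    rewrite E.
    assert (H1 : Rabs c * x / e^2 <= 1).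
    { apply Rmult_le_reg_r with (e^2). nra.
      unfold Rdiv. rewrite Rmult_assoc, Rinv_l by lra. nra. }
    assert (0 < 1 / Rabs D) by (apply Rdiv_lt_0_compat; lra).
    nra.
Qed.

Lemma part1 J mu D T kappa N k : D <> 0 -> 0 < T ->
  0 < eps J mu D kappa N k ->
  Rabs (EDelta J mu D T kappa N k - T / 2 * Rabs (fN kappa N k))
    <= T * (Rabs J + Rabs mu) / Rabs D + 1 / Rabs D.
Proof.
  intros hD hT he.
  assert (hDp : 0 < Rabs D) by (apply Rabs_pos_lt; auto).
  unfold EDelta, aD, xiD.
  set (f := fN kappa N k) in *.
  set (e := eps J mu D kappa N k) in *.
  assert (He : e = sqrt ((D * f / 2) ^ 2 + (J * cos k + mu) ^ 2)) by reflexivity.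
  set (c := J * cos k + mu) in *.
  destruct (core_ax D f c e hD He he) as [H1 [H2 H3]].
  destruct (scrE_bounds T (D * f ^ 2 / (4 * e)) (- c * f / (2 * e ^ 2)) e hT) as [B1 B2].
  assert (Hc : Rabs c <= Rabs J + Rabs mu).
  { unfold c. eapply Rle_trans. apply Rabs_triang. rewrite Rabs_mult.
    assert (Rabs (cos k) <= 1) by (apply Rabs_le; apply COS_bound).
    assert (0 <= Rabs J) by apply Rabs_pos. nra. }
  assert (Hc2 : T * (Rabs c / Rabs D) <= T * (Rabs J + Rabs mu) / Rabs D).
  { unfold Rdiv. rewrite <- Rmult_assoc. apply Rmult_le_compat_r.
    left; apply Rinv_0_lt_compat; lra. nra. }
  set (A := Rabs (D * f ^ 2 / (4 * e))) in *.
  set (E := scrE T (D * f ^ 2 / (4 * e)) (- c * f / (2 * e ^ 2)) e) in *.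
  apply Rabs_le. split; nra.
Qed.

Lemma eps_zero J mu D kappa N k : D <> 0 -> ~ 0 < eps J mu D kappa N k ->
  fN kappa N k = 0.
Proof.
  intros hD hn. unfold eps in hn.
  assert (H0 := sqrt_pos ((D * fN kappa N k / 2) ^ 2 + (J * cos k + mu) ^ 2)).
  assert (Hz : sqrt ((D * fN kappa N k / 2) ^ 2 + (J * cos k + mu) ^ 2) = 0) by lra.
  apply sqrt_eq_0 in Hz.
  - assert (0 <= (J * cos k + mu) ^ 2) by apply pow2_ge_0.
    assert (0 <= (D * fN kappa N k / 2) ^ 2) by apply pow2_ge_0.
    assert (Hq : (D * fN kappa N k / 2) ^ 2 = 0) by lra.
    assert (Hq1 : D * fN kappa N k / 2 = 0).
    { destruct (Req_dec (D * fN kappa N k / 2) 0) as [h|h]; auto.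
      exfalso. exact (pow_nonzero _ 2 h Hq). }
    destruct (Rmult_integral _ _ Hq1) as [Hq2|Hq2].
    + destruct (Rmult_integral _ _ Hq2); [contradiction| auto].
    + exfalso. assert (/ 2 <> 0) by (apply Rinv_neq_0_compat; lra). auto.
  - assert (0 <= (J * cos k + mu) ^ 2) by apply pow2_ge_0.
    assert (0 <= (D * fN kappa N k / 2) ^ 2) by apply pow2_ge_0. lra.
Qed.

Lemma sum_bound (g h : nat -> R) T C N : 0 <= C ->
  (forall n, (n < N)%nat -> 0 <= g n /\ Rabs (g n - T / 2 * h n) <= C) ->
  forall m, (m <= N)%nat ->
  0 <= sum0 g m /\ Rabs (sum0 g m - T * sum0 h m / 2) <= C * INR m.
Proof.
  intros hC H m. induction m as [|m IH]; intros hm; simpl.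
  - split; [lra|]. apply Rabs_le. lra.
  - destruct IH as [IH1 IH2]. lia. destruct (H m) as [G1 G2]. lia.
    split. lra.
    replace (sum0 g m + g m - T * (sum0 h m + h m) / 2) with
      ((sum0 g m - T * sum0 h m / 2) + (g m - T / 2 * h m)) by field.
    eapply Rle_trans. apply Rabs_triang.
    destruct m; simpl INR in *; lra.
Qed.

Theorem mainTheorem9 (J mu D T : R) (hD : D <> 0) (hT : 0 < T) :
  exists C : R,
    forall kappa : nat -> R,
      (forall N : nat, Nat.Even N -> (4 <= N)%nat ->
         forall n : nat, (n < N)%nat ->
           0 < eps J mu D kappa N (kmom N n) ->
           Rabs (EDelta J mu D T kappa N (kmom N n)
                 - T / 2 * Rabs (fN kappa N (kmom N n))) <= C)
      /\
      (forall N : nat, Nat.Even N -> (4 <= N)%nat ->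
         Rabs (sqrt (QFI J mu D T kappa N) - T * gammaN kappa N / 2) <= C * INR N).
Proof.
  assert (hDp : 0 < Rabs D) by (apply Rabs_pos_lt; auto).
  assert (hC : 0 <= T * (Rabs J + Rabs mu) / Rabs D + 1 / Rabs D).
  { assert (0 <= Rabs J) by apply Rabs_pos. assert (0 <= Rabs mu) by apply Rabs_pos.
    assert (0 < / Rabs D) by (apply Rinv_0_lt_compat; lra).
    assert (0 <= T * (Rabs J + Rabs mu)) by nra.
    assert (0 <= T * (Rabs J + Rabs mu) * / Rabs D) by (apply Rmult_le_pos; lra).
    unfold Rdiv. lra. }
  exists (T * (Rabs J + Rabs mu) / Rabs D + 1 / Rabs D).
  intros kappa. split.
  - intros N _ _ n _ he. apply part1; auto.
  - intros N _ _. unfold QFI, gammaN.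
    destruct (sum_bound
      (fun n => if Rlt_dec 0 (eps J mu D kappa N (kmom N n))
                then EDelta J mu D T kappa N (kmom N n) else 0)
      (fun n => Rabs (fN kappa N (kmom N n))) T _ N hC) with (m := N) as [S1 S2];
      [| lia |].
    + intros n _. destruct (Rlt_dec 0 (eps J mu D kappa N (kmom N n))) as [h|h].
      * split. unfold EDelta, scrE. apply sqrt_pos. apply part1; auto.
      * rewrite (eps_zero J mu D kappa N (kmom N n) hD h), Rabs_R0.
        replace (0 - T / 2 * 0) with 0 by ring. rewrite Rabs_R0. lra.
    + rewrite sqrt_pow2 by exact S1. exact S2.
Qed.
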